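(* Let $C$ be a circle with centre $o$ and radius $r>0$, and let $p'$ be a point with $\lambda=|op'|<r$. Consider all triangles $\triangle abc$ with $a,b,c$ on $C$ and $p'\in\triangle abc$, and let $\mathrm{MinMax}$ be the minimum, over all such triangles, of the length of the longest edge. Then (1) if $\tfrac12 r\le\lambda<r$, $\mathrm{MinMax}=2\sqrt{r^2-\lambda^2}$; (2) if $0\le\lambda\le\tfrac12 r$, $\mathrm{MinMax}=\sqrt3\,r$. *)

(* Defs.v *)
From Stdlib Require Import Reals.
Open Scope R_scope.

Definition point := (R * R)%type.

Definition edist (p q : point) : R :=
  sqrt ((fst p - fst q) ^ 2 + (snd p - snd q) ^ 2).

Definition on_circle (o : point) (r : R) (p : point) : Prop :=
  edist o p = r.

Definition in_triangle (a b c p : point) : Prop :=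
  exists s t u : R, 0 <= s /\ 0 <= t /\ 0 <= u /\ s + t + u = 1 /\
    fst p = s * fst a + t * fst b + u * fst c /\
    snd p = s * snd a + t * snd b + u * snd c.

Definition max_edge (a b c : point) : R :=
  Rmax (edist a b) (Rmax (edist b c) (edist c a)).

Definition admissible (o : point) (r : R) (p a b c : point) : Prop :=
  a <> b /\ b <> c /\ c <> a /\
  on_circle o r a /\ on_circle o r b /\ on_circle o r c /\
  in_triangle a b c p.

Definition is_MinMax (o : point) (r : R) (p : point) (m : R) : Prop :=
  (exists a b c, admissible o r p a b c /\ max_edge a b c = m) /\
  (forall a b c, admissible o r p a b c -> m <= max_edge a b c).

(* Main.v *)
Require Import Defs.
From Stdlib Require Import Reals Lra Lia Psatz.
Open Scope R_scope.

Lemma lemC (ax ay bx by' cx cy px py r s t u wA wB wC : R) :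
 ax^2+ay^2 = r^2 -> bx^2+by'^2=r^2 -> cx^2+cy^2 = r^2 ->
 0<=s -> 0<=t -> 0<=u -> s+t+u=1 -> px = s*ax+t*bx+u*cx -> py = s*ay+t*by'+u*cy ->
 wA*ax+wB*bx+wC*cx = 0 -> wA*ay+wB*by'+wC*cy=0 -> 0 < wA+wB+wC -> wC < 0 ->
 4*(r^2 - (px^2+py^2)) <= (ax-bx)^2+(ay-by')^2.
Proof.
intros hA hB hC hs ht hu hst hpx hpy wx wy hD hc.
set (mx := (ax+bx)/2). set (my := (ay+by')/2).
assert (Am : ax*mx+ay*my = mx^2+my^2) by (unfold mx, my; nra).
assert (Bm : bx*mx+by'*my = mx^2+my^2) by (unfold mx, my; nra).
assert (W : wA*(ax*mx+ay*my) + wB*(bx*mx+by'*my) + wC*(cx*mx+cy*my) = 0).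
{ replace (wA*(ax*mx+ay*my) + wB*(bx*mx+by'*my) + wC*(cx*mx+cy*my)) with
   ((wA*ax+wB*bx+wC*cx)*mx + (wA*ay+wB*by'+wC*cy)*my) by ring.
  rewrite wx, wy; ring. }
rewrite Am, Bm in W.
assert (W2 : wC*((cx*mx+cy*my) - (mx^2+my^2)) = -(wA+wB+wC)*(mx^2+my^2)) by lra.
assert (Cm : cx*mx+cy*my - (mx^2+my^2) >= 0).
{ destruct (Rlt_or_le (cx*mx+cy*my - (mx^2+my^2)) 0) as [h|h]; [|lra].
  assert (0 < wC*((cx*mx+cy*my) - (mx^2+my^2))) by nra.
  assert (0 <= (wA+wB+wC)*(mx^2+my^2)) by nra. lra. }
assert (Pm : px*mx+py*my = s*(ax*mx+ay*my) + t*(bx*mx+by'*my) + u*(cx*mx+cy*my))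
  by (rewrite hpx, hpy; ring).
rewrite Am, Bm in Pm.
assert (Pm2 : px*mx+py*my >= mx^2+my^2).
{ assert (0 <= u*(cx*mx+cy*my - (mx^2+my^2))) by (apply Rmult_le_pos; lra).
  replace (mx^2+my^2) with ((s+t+u)*(mx^2+my^2)) by (rewrite hst; ring). rewrite Pm. lra. }
assert (CS : (px*mx+py*my)^2 <= (px^2+py^2)*(mx^2+my^2)).
{ assert (e: (px^2+py^2)*(mx^2+my^2) - (px*mx+py*my)^2 = (px*my-py*mx)^2) by ring. assert (0 <= (px*my-py*mx)^2) by apply pow2_ge_0. lra. }
assert (mP : mx^2+my^2 <= px^2+py^2).
{ destruct (Req_dec (mx^2+my^2) 0) as [z|z]. nra.
  assert (0 < mx^2+my^2) by nra.
  assert ((mx^2+my^2)*(mx^2+my^2) <= (px^2+py^2)*(mx^2+my^2)) by nra.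
  nra. }
assert (E : (ax-bx)^2+(ay-by')^2 = 4*r^2 - 4*(mx^2+my^2)) by (unfold mx, my; nra).
lra.
Qed.

Lemma lemPos (ax ay bx by' cx cy r wA wB wC : R) :
 0 < r -> ax^2+ay^2 = r^2 -> bx^2+by'^2=r^2 -> cx^2+cy^2 = r^2 ->
 wA*ax+wB*bx+wC*cx = 0 -> wA*ay+wB*by'+wC*cy=0 -> 0 < wA+wB+wC ->
 0 <= wA -> 0 <= wB -> 0 <= wC ->
 3*r^2 <= (ax-bx)^2+(ay-by')^2 \/ 3*r^2 <= (bx-cx)^2+(by'-cy)^2 \/
 3*r^2 <= (cx-ax)^2+(cy-ay)^2.
Proof.
intros hr hA hB hC wx wy hD pa pb pc.
set (Eab := (ax-bx)^2+(ay-by')^2). set (Ebc := (bx-cx)^2+(by'-cy)^2).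
set (Eca := (cx-ax)^2+(cy-ay)^2). set (D := wA+wB+wC).
assert (I : r^2*D^2 - (wA*wB*Eab + wB*wC*Ebc + wC*wA*Eca) =
  (wA*ax+wB*bx+wC*cx)^2 + (wA*ay+wB*by'+wC*cy)^2
  + wA^2*(r^2-(ax^2+ay^2)) + wB^2*(r^2-(bx^2+by'^2)) + wC^2*(r^2-(cx^2+cy^2))
  + wA*wB*((r^2-(ax^2+ay^2)) + (r^2-(bx^2+by'^2)))
  + wB*wC*((r^2-(bx^2+by'^2)) + (r^2-(cx^2+cy^2)))
  + wC*wA*((r^2-(cx^2+cy^2)) + (r^2-(ax^2+ay^2)))) by (unfold Eab, Ebc, Eca, D; ring).
rewrite wx, wy, hA, hB, hC in I.
assert (I2 : r^2*D^2 = wA*wB*Eab + wB*wC*Ebc + wC*wA*Eca) by lra. clear I.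
destruct (Rle_or_lt (3*r^2) Eab) as [h1|h1]; [left; exact h1|].
destruct (Rle_or_lt (3*r^2) Ebc) as [h2|h2]; [right; left; exact h2|].
destruct (Rle_or_lt (3*r^2) Eca) as [h3|h3]; [right; right; exact h3|].
exfalso.
assert (Q : 3*(wA*wB+wB*wC+wC*wA) <= D^2).
{ unfold D. assert (0 <= (wA-wB)^2) by apply pow2_ge_0.
  assert (0 <= (wB-wC)^2) by apply pow2_ge_0. assert (0 <= (wC-wA)^2) by apply pow2_ge_0. nra. }
assert (t1 : 0 <= wA*wB*(3*r^2-Eab)) by (apply Rmult_le_pos; nra).
assert (t2 : 0 <= wB*wC*(3*r^2-Ebc)) by (apply Rmult_le_pos; nra).
assert (t3 : 0 <= wC*wA*(3*r^2-Eca)) by (apply Rmult_le_pos; nra).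
assert (S : wA*wB*(3*r^2-Eab) + wB*wC*(3*r^2-Ebc) + wC*wA*(3*r^2-Eca) <= 0) by nra.
assert (z1 : wA*wB = 0).
{ assert (wA*wB*(3*r^2-Eab) = 0) by lra.
  destruct (Rmult_integral _ _ H); [auto | lra]. }
assert (z2 : wB*wC = 0).
{ assert (wB*wC*(3*r^2-Ebc) = 0) by lra.
  destruct (Rmult_integral _ _ H); [auto | lra]. }
assert (z3 : wC*wA = 0).
{ assert (wC*wA*(3*r^2-Eca) = 0) by lra.
  destruct (Rmult_integral _ _ H); [auto | lra]. }
rewrite z1, z2, z3 in I2.
assert (0 < D) by (unfold D; lra).
assert (0 < r^2*D^2) by (apply Rmult_lt_0_compat; apply pow_lt; lra).
lra.
Qed.

Lemma noncol (ax ay bx by' cx cy r : R) :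
 ax^2+ay^2 = r^2 -> bx^2+by'^2=r^2 -> cx^2+cy^2 = r^2 ->
 0 < (ax-bx)^2+(ay-by')^2 -> 0 < (bx-cx)^2+(by'-cy)^2 -> 0 < (cx-ax)^2+(cy-ay)^2 ->
 (bx*cy-by'*cx)+(cx*ay-cy*ax)+(ax*by'-ay*bx) <> 0.
Proof.
intros hA hB hC d1 d2 d3 hD.
set (ux := bx-ax). set (uy := by'-ay). set (vx := cx-ax). set (vy := cy-ay).
assert (cr : ux*vy - uy*vx = 0) by (unfold ux,uy,vx,vy; lra).
assert (cu : 2*(ax*ux+ay*uy) + (ux^2+uy^2) = 0) by (unfold ux,uy; nra).
assert (cv : 2*(ax*vx+ay*vy) + (vx^2+vy^2) = 0) by (unfold vx,vy; nra).
assert (i1 : (ux^2+uy^2)*vx - (ux*vx+uy*vy)*ux = uy*(uy*vx-ux*vy)) by ring.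
assert (i2 : (ux^2+uy^2)*vy - (ux*vx+uy*vy)*uy = ux*(ux*vy-uy*vx)) by ring.
replace (uy*vx-ux*vy) with 0 in i1 by lra. rewrite cr in i2.
assert (j1 : (ux^2+uy^2)*(ax*vx+ay*vy) = (ux*vx+uy*vy)*(ax*ux+ay*uy)).
{ replace ((ux^2+uy^2)*(ax*vx+ay*vy)) with (ax*((ux^2+uy^2)*vx) + ay*((ux^2+uy^2)*vy)) by ring.
  replace ((ux^2+uy^2)*vx) with ((ux*vx+uy*vy)*ux) by lra.
  replace ((ux^2+uy^2)*vy) with ((ux*vx+uy*vy)*uy) by lra. ring. }
assert (j2 : (ux^2+uy^2)*(vx^2+vy^2) = (ux*vx+uy*vy)^2).
{ replace ((ux^2+uy^2)*(vx^2+vy^2)) with (vx*((ux^2+uy^2)*vx) + vy*((ux^2+uy^2)*vy)) by ring.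
  replace ((ux^2+uy^2)*vx) with ((ux*vx+uy*vy)*ux) by lra.
  replace ((ux^2+uy^2)*vy) with ((ux*vx+uy*vy)*uy) by lra. ring. }
assert (U : 0 < ux^2+uy^2) by (unfold ux, uy; nra).
assert (V : 0 < vx^2+vy^2) by (unfold vx, vy; nra).
assert (UV : 0 < (ux-vx)^2+(uy-vy)^2) by (unfold ux,uy,vx,vy; nra).
assert (k1 : (ux^2+uy^2)*((vx^2+vy^2) - (ux*vx+uy*vy)) = 0).
{ replace (ax*vx+ay*vy) with (-(vx^2+vy^2)/2) in j1 by lra.
  replace (ax*ux+ay*uy) with (-(ux^2+uy^2)/2) in j1 by lra. lra. }
assert (k2 : vx^2+vy^2 = ux*vx+uy*vy).
{ destruct (Rmult_integral _ _ k1); lra. }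
rewrite <- k2 in j2.
assert (k3 : ux^2+uy^2 = vx^2+vy^2).
{ assert ((vx^2+vy^2)*((ux^2+uy^2) - (vx^2+vy^2)) = 0) by lra.
  destruct (Rmult_integral _ _ H); lra. }
assert (e : (ux-vx)^2+(uy-vy)^2 = (ux^2+uy^2) + (vx^2+vy^2) - 2*(ux*vx+uy*vy)) by ring.
lra.
Qed.

Lemma lowerW (ax ay bx by' cx cy px py r s t u wA wB wC : R) :
 0 < r -> ax^2+ay^2 = r^2 -> bx^2+by'^2=r^2 -> cx^2+cy^2 = r^2 ->
 0<=s -> 0<=t -> 0<=u -> s+t+u=1 -> px = s*ax+t*bx+u*cx -> py = s*ay+t*by'+u*cy ->
 wA*ax+wB*bx+wC*cx = 0 -> wA*ay+wB*by'+wC*cy=0 -> 0 < wA+wB+wC ->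
 (3*r^2 <= (ax-bx)^2+(ay-by')^2 \/ 3*r^2 <= (bx-cx)^2+(by'-cy)^2 \/
  3*r^2 <= (cx-ax)^2+(cy-ay)^2) \/
 (4*(r^2 - (px^2+py^2)) <= (ax-bx)^2+(ay-by')^2 \/
  4*(r^2 - (px^2+py^2)) <= (bx-cx)^2+(by'-cy)^2 \/
  4*(r^2 - (px^2+py^2)) <= (cx-ax)^2+(cy-ay)^2).
Proof.
intros hr hA hB hC hs ht hu hst hpx hpy wx wy hD.
destruct (Rlt_or_le wC 0) as [c|c].
{ right; left. apply lemC with (s:=s) (t:=t) (u:=u) (cx:=cx) (cy:=cy) (wA:=wA) (wB:=wB) (wC:=wC); auto. }
destruct (Rlt_or_le wA 0) as [a|a].
{ right; right; left. apply lemC with (ax:=bx) (ay:=by') (bx:=cx) (by':=cy) (cx:=ax) (cy:=ay)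
   (s:=t) (t:=u) (u:=s) (wA:=wB) (wB:=wC) (wC:=wA); auto; lra. }
destruct (Rlt_or_le wB 0) as [b|b].
{ right; right; right. apply lemC with (ax:=cx) (ay:=cy) (bx:=ax) (by':=ay) (cx:=bx) (cy:=by')
   (s:=u) (t:=s) (u:=t) (wA:=wC) (wB:=wA) (wC:=wB); auto; lra. }
left. eapply lemPos; eauto.
Qed.

Lemma lower (ax ay bx by' cx cy px py r s t u : R) :
 0 < r -> ax^2+ay^2 = r^2 -> bx^2+by'^2=r^2 -> cx^2+cy^2 = r^2 ->
 0 < (ax-bx)^2+(ay-by')^2 -> 0 < (bx-cx)^2+(by'-cy)^2 -> 0 < (cx-ax)^2+(cy-ay)^2 ->
 0<=s -> 0<=t -> 0<=u -> s+t+u=1 -> px = s*ax+t*bx+u*cx -> py = s*ay+t*by'+u*cy ->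
 (3*r^2 <= (ax-bx)^2+(ay-by')^2 \/ 3*r^2 <= (bx-cx)^2+(by'-cy)^2 \/
  3*r^2 <= (cx-ax)^2+(cy-ay)^2) \/
 (4*(r^2 - (px^2+py^2)) <= (ax-bx)^2+(ay-by')^2 \/
  4*(r^2 - (px^2+py^2)) <= (bx-cx)^2+(by'-cy)^2 \/
  4*(r^2 - (px^2+py^2)) <= (cx-ax)^2+(cy-ay)^2).
Proof.
intros hr hA hB hC d1 d2 d3 hs ht hu hst hpx hpy.
pose proof (noncol ax ay bx by' cx cy r hA hB hC d1 d2 d3) as N.
destruct (Rlt_or_le 0 ((bx*cy-by'*cx)+(cx*ay-cy*ax)+(ax*by'-ay*bx))) as [P|P].
- apply lowerW with (s:=s) (t:=t) (u:=u) (wA := bx*cy-by'*cx) (wB := cx*ay-cy*ax) (wC := ax*by'-ay*bx); auto; try ring; lra.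
- apply lowerW with (s:=s) (t:=t) (u:=u) (wA := -(bx*cy-by'*cx)) (wB := -(cx*ay-cy*ax)) (wC := -(ax*by'-ay*bx)); auto; try ring.
  destruct P; [lra| contradiction].
Qed.

Lemma sq_of_sqrt (X r : R) : 0 <= X -> sqrt X = r -> X = r^2.
Proof. intros h e. rewrite <- e, pow2_sqrt; auto. Qed.

Lemma sq_pos_of_neq (a b : point) : a <> b -> 0 < (fst a - fst b)^2 + (snd a - snd b)^2.
Proof.
destruct a as [a1 a2], b as [b1 b2]; simpl; intro h.
destruct (Rle_or_lt ((a1 - b1)^2 + (a2 - b2)^2) 0) as [l|l]; [|exact l].
exfalso. apply h. assert (0 <= (a1-b1)^2) by apply pow2_ge_0. assert (0 <= (a2-b2)^2) by apply pow2_ge_0.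
assert (e1 : (a1-b1)^2 = 0) by lra. assert (e2 : (a2-b2)^2 = 0) by lra.
rewrite <- Rsqr_pow2 in e1, e2. apply Rsqr_0_uniq in e1. apply Rsqr_0_uniq in e2.
replace b1 with a1 by lra. replace b2 with a2 by lra. reflexivity.
Qed.

Lemma neq_of_sq (a b : point) : 0 < (fst a - fst b)^2 + (snd a - snd b)^2 -> a <> b.
Proof. intros h e; subst; lra. Qed.

Lemma max_ge (a b c : point) (K : R) : 
 (K <= (fst a - fst b)^2 + (snd a - snd b)^2 \/ K <= (fst b - fst c)^2 + (snd b - snd c)^2 \/
  K <= (fst c - fst a)^2 + (snd c - snd a)^2) -> sqrt K <= max_edge a b c.
Proof.
unfold max_edge, edist. intros [h|[h|h]]; apply sqrt_le_1_alt in h.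
- eapply Rle_trans; [exact h| apply Rmax_l].
- eapply Rle_trans; [exact h| eapply Rle_trans; [apply Rmax_l| apply Rmax_r]].
- eapply Rle_trans; [exact h| eapply Rle_trans; [apply Rmax_r| apply Rmax_r]].
Qed.

Lemma lowerMain (o p : point) (r : R) (a b c : point) : 0 < r -> admissible o r p a b c ->
 let L := (fst o - fst p)^2 + (snd o - snd p)^2 in
 (3*r^2 <= (fst a - fst b)^2 + (snd a - snd b)^2 \/ 3*r^2 <= (fst b - fst c)^2 + (snd b - snd c)^2 \/
  3*r^2 <= (fst c - fst a)^2 + (snd c - snd a)^2) \/
 (4*(r^2 - L) <= (fst a - fst b)^2 + (snd a - snd b)^2 \/
  4*(r^2 - L) <= (fst b - fst c)^2 + (snd b - snd c)^2 \/
  4*(r^2 - L) <= (fst c - fst a)^2 + (snd c - snd a)^2).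
Proof.
intros hr [nab [nbc [nca [ca [cb [cc [s [t [u [hs [ht [hu [hst [h1 h2]]]]]]]]]]]]]] L.
apply sq_pos_of_neq in nab. apply sq_pos_of_neq in nbc. apply sq_pos_of_neq in nca.
unfold on_circle, edist in ca, cb, cc.
apply sq_of_sqrt in ca; [|apply Rplus_le_le_0_compat; apply pow2_ge_0]. apply sq_of_sqrt in cb; [|apply Rplus_le_le_0_compat; apply pow2_ge_0]. apply sq_of_sqrt in cc; [|apply Rplus_le_le_0_compat; apply pow2_ge_0].
unfold L; clear L.
destruct o as [o1 o2], p as [p1 p2], a as [a1 a2], b as [b1 b2], c as [c1 c2]; simpl in *.
assert (H := lower (a1-o1) (a2-o2) (b1-o1) (b2-o2) (c1-o1) (c2-o2) (p1-o1) (p2-o2) r s t u hr).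
replace (a1 - o1 - (b1 - o1)) with (a1-b1) in H by ring.
replace (a2 - o2 - (b2 - o2)) with (a2-b2) in H by ring.
replace (b1 - o1 - (c1 - o1)) with (b1-c1) in H by ring.
replace (b2 - o2 - (c2 - o2)) with (b2-c2) in H by ring.
replace (c1 - o1 - (a1 - o1)) with (c1-a1) in H by ring.
replace (c2 - o2 - (a2 - o2)) with (c2-a2) in H by ring.
replace ((p1-o1)^2) with ((o1-p1)^2) in H by ring.
replace ((p2-o2)^2) with ((o2-p2)^2) in H by ring.
apply H; auto.
- replace ((a1-o1)^2+(a2-o2)^2) with ((o1-a1)^2+(o2-a2)^2) by ring; auto.
- replace ((b1-o1)^2+(b2-o2)^2) with ((o1-b1)^2+(o2-b2)^2) by ring; auto.
- replace ((c1-o1)^2+(c2-o2)^2) with ((o1-c1)^2+(o2-c2)^2) by ring; auto.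
- rewrite h1. replace u with (1-s-t) by lra. ring.
- rewrite h2. replace u with (1-s-t) by lra. ring.
Qed.

Lemma edist_eq (a b : point) (d : R) : 0 <= d ->
 (fst a - fst b)^2 + (snd a - snd b)^2 = d^2 -> edist a b = d.
Proof. intros h e; unfold edist; rewrite e; apply sqrt_pow2; auto. Qed.

Lemma equi (o p : point) (r : R) : 0 < r ->
 (fst o - fst p)^2 + (snd o - snd p)^2 <= r^2/4 ->
 exists a b c, admissible o r p a b c /\ max_edge a b c = sqrt 3 * r.
Proof.
intros hr hL.
assert (q3 : sqrt 3 ^ 2 = 3) by (apply pow2_sqrt; lra).
assert (p3 : 0 < sqrt 3) by (apply sqrt_lt_R0; lra).
set (s3 := sqrt 3) in *.
destruct o as [o1 o2], p as [p1 p2]; simpl in *.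
set (X := p1 - o1). set (Y := p2 - o2).
assert (hXY : X^2 + Y^2 <= r^2/4) by (unfold X, Y; nra).
exists (o1+r, o2), (o1 - r/2, o2 + r*s3/2), (o1 - r/2, o2 - r*s3/2).
assert (eAB : edist (o1+r, o2) (o1 - r/2, o2 + r*s3/2) = s3*r).
{ apply edist_eq; simpl; nra. }
assert (eBC : edist (o1 - r/2, o2 + r*s3/2) (o1 - r/2, o2 - r*s3/2) = s3*r).
{ apply edist_eq; simpl; nra. }
assert (eCA : edist (o1 - r/2, o2 - r*s3/2) (o1+r, o2) = s3*r).
{ apply edist_eq; simpl; nra. }
split.
2:{ unfold max_edge. rewrite eAB, eBC, eCA. unfold Rmax; repeat destruct Rle_dec; reflexivity. }
split; [apply neq_of_sq; simpl; nra|].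
split; [apply neq_of_sq; simpl; nra|].
split; [apply neq_of_sq; simpl; nra|].
split; [unfold on_circle; apply edist_eq; simpl; nra|].
split; [unfold on_circle; apply edist_eq; simpl; nra|].
split; [unfold on_circle; apply edist_eq; simpl; nra|].
assert (hX : -(r/2) <= X) by nra.
assert (hA1 : X - s3*Y <= r).
{ assert (e : 4*(X^2+Y^2) - (X - s3*Y)^2 = (s3*X+Y)^2) by nra.
  assert (0 <= (s3*X+Y)^2) by apply pow2_ge_0. nra. }
assert (hA2 : X + s3*Y <= r).
{ assert (e : 4*(X^2+Y^2) - (X + s3*Y)^2 = (s3*X-Y)^2) by nra.
  assert (0 <= (s3*X-Y)^2) by apply pow2_ge_0. nra. }
exists ((2*X+r)/(3*r)), ((r - X + s3*Y)/(3*r)), ((r - X - s3*Y)/(3*r)).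
assert (ir : 0 < /(3*r)) by (apply Rinv_0_lt_compat; lra).
unfold Rdiv.
split; [apply Rmult_le_pos; lra|].
split; [apply Rmult_le_pos; lra|].
split; [apply Rmult_le_pos; lra|].
split; [field; lra|].
simpl. split.
- unfold X. field. lra.
- unfold Y. field_simplify; [|lra]. replace (s3^2) with 3. field. lra.
Qed.

Lemma edist_le (a b : point) (d : R) : 0 <= d ->
 (fst a - fst b)^2 + (snd a - snd b)^2 <= d^2 -> edist a b <= d.
Proof. intros h e; unfold edist. rewrite <- (sqrt_pow2 d h). apply sqrt_le_1_alt; auto. Qed.

Lemma chord (o p : point) (r : R) : 0 < r ->
 0 < (fst o - fst p)^2 + (snd o - snd p)^2 ->
 (fst o - fst p)^2 + (snd o - snd p)^2 < r^2 ->
 exists a b c, admissible o r p a b c /\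
   max_edge a b c = 2 * sqrt (r^2 - ((fst o - fst p)^2 + (snd o - snd p)^2)).
Proof.
intros hr hL0 hL1.
destruct o as [o1 o2], p as [p1 p2]; cbn [fst snd] in *.
set (L := (o1 - p1)^2 + (o2 - p2)^2) in *.
assert (q1 : sqrt L ^ 2 = L) by (apply pow2_sqrt; lra).
assert (l0 : 0 < sqrt L) by (apply sqrt_lt_R0; lra).
assert (qh : sqrt (r^2 - L) ^ 2 = r^2 - L) by (apply pow2_sqrt; lra).
assert (h0 : 0 < sqrt (r^2 - L)) by (apply sqrt_lt_R0; lra).
assert (E : exists lam e1 e2, 0 < lam /\ lam^2 = L /\ e1^2 + e2^2 = 1 /\
   p1 = o1 + lam*e1 /\ p2 = o2 + lam*e2).
{ exists (sqrt L), ((p1-o1)/sqrt L), ((p2-o2)/sqrt L).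
  split; [lra|]. split; [lra|]. split.
  - replace (((p1-o1)/sqrt L)^2 + ((p2-o2)/sqrt L)^2) with (((p1-o1)^2+(p2-o2)^2)/(sqrt L^2)) by (field; lra).
    rewrite q1. replace ((p1-o1)^2+(p2-o2)^2) with L by (unfold L; ring). field. lra.
  - split; field; lra. }
set (h := sqrt (r^2 - L)) in *. clearbody h.
destruct E as [lam [e1 [e2 [l [lL [ee [E1 E2]]]]]]].
rewrite <- lL in qh, hL1. clear q1 l0. clearbody L. subst L p1 p2.
assert (lr : lam < r) by nra.
exists (o1 + lam*e1 - h*e2, o2 + lam*e2 + h*e1), (o1 + lam*e1 + h*e2, o2 + lam*e2 - h*e1),
  (o1 + r*e1, o2 + r*e2).
assert (eAB : edist (o1 + lam*e1 - h*e2, o2 + lam*e2 + h*e1) (o1 + lam*e1 + h*e2, o2 + lam*e2 - h*e1) = 2*h).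
{ apply edist_eq; cbn [fst snd]; [lra|].
  replace ((o1 + lam * e1 - h * e2 - (o1 + lam * e1 + h * e2)) ^ 2 +
   (o2 + lam * e2 + h * e1 - (o2 + lam * e2 - h * e1)) ^ 2) with (4*h^2*(e1^2+e2^2)) by ring.
  rewrite ee; ring. }
assert (key : (lam-r)^2 + h^2 <= (2*h)^2).
{ assert (0 < (r-lam)*(2*r+4*lam)) by (apply Rmult_lt_0_compat; lra). nra. }
assert (eBC : edist (o1 + lam*e1 + h*e2, o2 + lam*e2 - h*e1) (o1 + r*e1, o2 + r*e2) <= 2*h).
{ apply edist_le; cbn [fst snd]; [lra|].
  replace ((o1 + lam * e1 + h * e2 - (o1 + r * e1)) ^ 2 + (o2 + lam * e2 - h * e1 - (o2 + r * e2)) ^ 2)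
   with ((lam-r)^2*(e1^2+e2^2) + h^2*(e1^2+e2^2)) by ring. rewrite ee; lra. }
assert (eCA : edist (o1 + r*e1, o2 + r*e2) (o1 + lam*e1 - h*e2, o2 + lam*e2 + h*e1) <= 2*h).
{ apply edist_le; cbn [fst snd]; [lra|].
  replace ((o1 + r * e1 - (o1 + lam * e1 - h * e2)) ^ 2 + (o2 + r * e2 - (o2 + lam * e2 + h * e1)) ^ 2)
   with ((lam-r)^2*(e1^2+e2^2) + h^2*(e1^2+e2^2)) by ring. rewrite ee; lra. }
split.
2:{ unfold max_edge. rewrite eAB. apply Rmax_left. apply Rmax_lub; auto. }
split; [apply neq_of_sq; simpl; nra|].
split; [apply neq_of_sq; simpl; nra|].
split; [apply neq_of_sq; simpl; nra|].
split; [unfold on_circle; apply edist_eq; simpl; nra|].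
split; [unfold on_circle; apply edist_eq; simpl; nra|].
split; [unfold on_circle; apply edist_eq; simpl; nra|].
exists (1/2), (1/2), 0. simpl. repeat split; try lra; ring.
Qed.

Theorem mainTheorem15 (o p : point) (r : R) (hr : 0 < r)
  (hp : edist o p < r) :
  (r / 2 <= edist o p ->
     is_MinMax o r p (2 * sqrt (r ^ 2 - (edist o p) ^ 2))) /\
  (edist o p <= r / 2 -> is_MinMax o r p (sqrt 3 * r)).
Proof.
assert (hL : edist o p ^ 2 = (fst o - fst p)^2 + (snd o - snd p)^2).
{ unfold edist. apply pow2_sqrt. apply Rplus_le_le_0_compat; apply pow2_ge_0. }
assert (l0 : 0 <= edist o p) by (unfold edist; apply sqrt_pos).
set (L := (fst o - fst p)^2 + (snd o - snd p)^2) in *.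
set (lam := edist o p) in *. clearbody lam.
split; intro H.
- rewrite hL. split.
  + assert (0 < lam*lam) by (apply Rmult_lt_0_compat; lra).
    assert (lam*lam < r*r) by (apply Rmult_le_0_lt_compat; lra).
    apply chord; auto; fold L; nra.
  + intros a b c ad. pose proof (lowerMain o p r a b c hr ad) as M. cbv zeta in M. fold L in M.
    replace (2 * sqrt (r^2 - L)) with (sqrt (4*(r^2-L))).
    2:{ rewrite sqrt_mult by nra. replace 4 with (2*2) by ring. rewrite sqrt_square; lra. }
    apply max_ge. destruct M as [[m|[m|m]]|[m|[m|m]]]; nra.
- split.
  + apply equi; auto. fold L. nra.
  + intros a b c ad. pose proof (lowerMain o p r a b c hr ad) as M. cbv zeta in M. fold L in M.
    replace (sqrt 3 * r) with (sqrt (3*r^2)).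
    2:{ rewrite sqrt_mult by nra. rewrite sqrt_pow2; lra. }
    apply max_ge. destruct M as [[m|[m|m]]|[m|[m|m]]]; nra.
Qed.
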